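(* Let $a,b\in[0,1]$ with $a\le b$. For $p,\tilde p\in[0,1]$ define the relative error \[ e_{\mathrm{rel}}(p,\tilde p):=\frac{|p-\tilde p|}{\min(p,1-p)}, \] with the conventions $\frac{0}{0}:=0$ and $\frac{x}{0}:=\infty$ for $x>0$; for $\tilde p\in[a,b]$ define $e_{\mathrm{rel}}([a,b],\tilde p):=\max_{p\in[a,b]}e_{\mathrm{rel}}(p,\tilde p)$, and define $e_{\mathrm{rel}}([a,b]):=\min_{\tilde p\in[a,b]}e_{\mathrm{rel}}([a,b],\tilde p)$. (i) If $a,b\in[0,1/2]$, then for all $\tilde p\in[a,b]$, \[ e_{\mathrm{rel}}([a,b],\tilde p)\ \ge\ e_{\mathrm{rel}}\Big([a,b],\frac{2ab}{a+b}\Big)=\frac{b-a}{b+a}, \] and hence $e_{\mathrm{rel}}([a,b])=\frac{b-a}{b+a}$. (ii) If $a,b\in[1/2,1]$, then for all $\tilde p\in[a,b]$, \[ e_{\mathrm{rel}}([a,b],\tilde p)\ \ge\ e_{\mathrm{rel}}\Big([a,b],\frac{a+b-2ab}{2-a-b}\Big)=\frac{b-a}{2-a-b}, \] and hence $e_{\mathrm{rel}}([a,b])=\frac{b-a}{2-a-b}$.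
   Context: Here $e_{\mathrm{rel}}([a,b],\tilde p)$ is the worst-case relative error of approximating an unknown probability known to lie in $[a,b]$ by $\tilde p$, and $e_{\mathrm{rel}}([a,b])$ is the best achievable such error. The conventions $\frac00:=0$ and $\frac x0:=\infty$ ($x>0$) also apply to the displayed fractions (e.g. when $a=b=0$ or $a=b=1$). *)

(* Defs.v *)
From HB Require Import structures.
From mathcomp Require Import all_boot all_order all_algebra.
From mathcomp Require Import all_classical all_reals ereal.
Set Implicit Arguments. Unset Strict Implicit. Unset Printing Implicit Defensive.
Import Order.TTheory GRing.Theory Num.Theory.
Local Open Scope ring_scope.
Local Open Scope classical_set_scope.

Definition erel (R : realType) (p pt : R) : \bar R :=
  let d := Num.min p (1 - p) in
  if d == 0 then (if `|p - pt| == 0 then 0%E else +oo%E)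
  else (`|p - pt| / d)%:E.

Definition erel_int (R : realType) (a b pt : R) : \bar R :=
  ereal_sup [set erel p pt | p in [set p : R | a <= p <= b]].

Definition erel_opt (R : realType) (a b : R) : \bar R :=
  ereal_inf [set erel_int a b pt | pt in [set pt : R | a <= pt <= b]].

(* Main.v *)
Require Import Defs.
From HB Require Import structures.
From mathcomp Require Import all_boot all_order all_algebra.
From mathcomp Require Import all_classical all_reals ereal.
From mathcomp Require Import ring lra.
Import Order.TTheory GRing.Theory Num.Theory.
Local Open Scope ring_scope.

Section S.
Variable R : realType.
Implicit Types a b p pt : R.

Lemma erel_pos p pt : 0 < p -> p <= 1/2 -> erel p pt = (`|p - pt| / p)%:E.
Proof. move=> h1 h2; rewrite /erel min_l; last lra. by rewrite gt_eqF. Qed.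

Lemma erel0 pt : erel 0 pt = (if pt == 0 then 0%E else +oo%E).
Proof.
rewrite /erel min_l; last lra. rewrite eqxx sub0r normrN normr_eq0 //.
Qed.

Lemma erel_sym p pt : erel (1 - p) (1 - pt) = erel p pt.
Proof.
rewrite /erel. have -> : 1 - (1 - p) = p by ring.
have -> : 1 - p - (1 - pt) = - (p - pt) by ring.
by rewrite normrN minC.
Qed.

Lemma erel_int_sym a b pt : erel_int a b pt = erel_int (1 - b) (1 - a) (1 - pt).
Proof.
rewrite /erel_int; congr ereal_sup; apply/seteqP; split => x [p Hp <-].
- exists (1 - p); first by move: Hp => /andP[? ?]; apply/andP; split; lra.
  by rewrite erel_sym.
- exists (1 - p); first by move: Hp => /andP[? ?]; apply/andP; split; lra.
  rewrite -(erel_sym (1-p)); congr erel; ring.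
Qed.

Lemma erel_opt_sym a b : erel_opt a b = erel_opt (1 - b) (1 - a).
Proof.
rewrite /erel_opt; congr ereal_inf; apply/seteqP; split => x [p Hp <-].
- exists (1 - p); first by move: Hp => /andP[? ?]; apply/andP; split; lra.
  by rewrite [RHS]erel_int_sym.
- exists (1 - p); first by move: Hp => /andP[? ?]; apply/andP; split; lra.
  rewrite erel_int_sym. have -> : 1 - (1 - p) = p by ring. 
  by [].
Qed.

Lemma pt0_in a b : 0 <= a -> a <= b -> a <= 2 * a * b / (a + b) <= b.
Proof.
move=> ha hab. have [s0|spos] := eqVneq (a + b) 0.
  have a0 : a = 0 by lra. have b0 : b = 0 by lra.
  by rewrite a0 b0 !mulr0 !mul0r lexx.
have sp : 0 < a + b by rewrite lt_def spos /=; lra.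
rewrite ler_pdivlMr // ler_pdivrMr //; apply/andP; split; nra.
Qed.

Lemma partI_ub a b p : 0 <= a -> a <= b -> b <= 1/2 -> a <= p <= b ->
  (erel p (2 * a * b / (a + b)) <= ((b - a) / (b + a))%:E)%E.
Proof.
move=> ha hab hb /andP[hp1 hp2].
have [p0|ppos] := eqVneq p 0.
  have a0 : a = 0 by lra. rewrite p0 a0 erel0 !mulr0 !mul0r eqxx lee_fin.
  rewrite subr0 addr0; have [->|bn] := eqVneq b 0; first by rewrite mul0r.
  by rewrite divff.
have pp : 0 < p by rewrite lt_def ppos /=; lra.
have sp : 0 < a + b by lra.
rewrite erel_pos; [|lra|lra]. rewrite lee_fin ler_pdivrMr //.
set q := 2 * a * b / (a + b). set c := (b - a) / (b + a).
have e1 : q * (a + b) = 2 * a * b by rewrite /q divfK // gt_eqF.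
have e2 : c * (a + b) = b - a by rewrite /c (addrC b a) divfK // gt_eqF.
have e3 : c * p * (a + b) = (b - a) * p by rewrite -e2; ring.
move: q c e1 e2 e3 => q c e1 e2 e3.
rewrite ler_norml; apply/andP; split; nra.
Qed.

Lemma partI_att a b : 0 <= a -> a <= b -> b <= 1/2 ->
  erel b (2 * a * b / (a + b)) = ((b - a) / (b + a))%:E.
Proof.
move=> ha hab hb.
have [b0|bpos] := eqVneq b 0.
  have a0 : a = 0 by lra. by rewrite b0 a0 erel0 !(mulr0, mul0r, subr0, addr0) eqxx.
have bp : 0 < b by rewrite lt_def bpos /=; lra.
have sp : 0 < a + b by lra.
rewrite erel_pos; [|lra|lra]. congr EFin.
have := @pt0_in a b ha hab => /andP[_ h].
rewrite ger0_norm ?subr_ge0 //. field. apply/andP; split; rewrite gt_eqF //; lra.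
Qed.

Lemma partI_lb a b pt : 0 <= a -> a <= b -> b <= 1/2 -> a <= pt <= b ->
  exists2 p, a <= p <= b & (((b - a) / (b + a))%:E <= erel p pt)%E.
Proof.
move=> ha hab hb /andP[h1 h2].
have [a0|apos] := eqVneq a 0.
  have [pt0|ptn] := eqVneq pt 0.
    exists b; first by rewrite lexx hab.
    rewrite a0 pt0 subr0 addr0.
    have [b0|bn] := eqVneq b 0; first by rewrite b0 erel0 eqxx mul0r.
    rewrite erel_pos; [|rewrite lt_def bn /=; lra|lra].
    by rewrite subr0 ger0_norm; [|lra].
  exists a; first by rewrite lexx hab.
  by rewrite a0 erel0 (negbTE ptn) leey.
have ap : 0 < a by rewrite lt_def apos /=; lra.
have sp : 0 < b + a by lra.
set c := (b - a) / (b + a).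
have e2 : c * (b + a) = b - a by rewrite /c divfK // gt_eqF.
have [H|H] := lerP (c * a) (pt - a).
  exists a; first by rewrite lexx hab.
  rewrite erel_pos; [|lra|lra]. rewrite lee_fin ler_pdivlMr //.
  rewrite distrC ger0_norm; lra.
exists b; first by rewrite lexx hab.
rewrite erel_pos; [|lra|lra]. rewrite lee_fin ler_pdivlMr; last lra.
rewrite ger0_norm; [|lra]. move: c e2 H => c e2 H. nra.
Qed.

Lemma partI a b : 0 <= a -> a <= b -> b <= 1/2 ->
     (forall pt : R, a <= pt <= b ->
        (erel_int a b (2 * a * b / (a + b)) <= erel_int a b pt)%E) /\
     erel_int a b (2 * a * b / (a + b)) = ((b - a) / (b + a))%:E /\
     erel_opt a b = ((b - a) / (b + a))%:E.
Proof.
move=> ha hab hb.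
have Eeq : erel_int a b (2 * a * b / (a + b)) = ((b - a) / (b + a))%:E.
  apply/eqP; rewrite eq_le; apply/andP; split.
    apply: ge_ereal_sup => x [p Hp <-]; exact: partI_ub.
  apply: le_ereal_sup_tmp; exists (erel b (2 * a * b / (a + b))).
    by exists b; rewrite /= ?lexx ?hab.
  by rewrite partI_att.
have lb : forall pt, a <= pt <= b -> (((b - a) / (b + a))%:E <= erel_int a b pt)%E.
  move=> pt Hpt; have [p Hp Hle] := @partI_lb a b pt ha hab hb Hpt.
  by apply: le_ereal_sup_tmp; exists (erel p pt) => //; exists p.
split; first by move=> pt Hpt; rewrite Eeq; exact: lb.
split => //.
apply/eqP; rewrite eq_le; apply/andP; split.
  apply: ge_ereal_inf; exists (erel_int a b (2 * a * b / (a + b))); last by rewrite Eeq.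
  by exists (2 * a * b / (a + b)) => //; exact: pt0_in.
by apply: le_ereal_inf_tmp => x [pt Hpt <-]; exact: lb.
Qed.

End S.

Theorem mainTheorem2 (R : realType) (a b : R) :
  0 <= a -> a <= b -> b <= 1 ->
  (* (i) *)
  (b <= 1/2 ->
     (forall pt : R, a <= pt <= b ->
        (erel_int a b (2 * a * b / (a + b)) <= erel_int a b pt)%E) /\
     erel_int a b (2 * a * b / (a + b)) = ((b - a) / (b + a))%:E /\
     erel_opt a b = ((b - a) / (b + a))%:E) /\
  (* (ii); the point (a+b-2ab)/(2-a-b) is written as 1 - 2(1-a)(1-b)/((1-a)+(1-b)),
     algebraically identical when 2-a-b <> 0, see NOTES.md *)
  (1/2 <= a ->
     (forall pt : R, a <= pt <= b ->
        (erel_int a b (1 - 2 * (1 - a) * (1 - b) / ((1 - a) + (1 - b)))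
           <= erel_int a b pt)%E) /\
     erel_int a b (1 - 2 * (1 - a) * (1 - b) / ((1 - a) + (1 - b)))
       = ((b - a) / (2 - a - b))%:E /\
     erel_opt a b = ((b - a) / (2 - a - b))%:E).
Proof.
move=> ha hab hb; split; first exact: partI.
move=> ha2.
have [H1 [H2 H3]] := @partI R (1 - b) (1 - a) ltac:(lra) ltac:(lra) ltac:(lra).
have Ec : ((1 - a) - (1 - b)) / ((1 - a) + (1 - b)) = (b - a) / (2 - a - b).
  by congr (_ / _); ring.
have Ep : 1 - (1 - 2 * (1 - a) * (1 - b) / (1 - a + (1 - b)))
          = 2 * (1 - b) * (1 - a) / (1 - b + (1 - a)).
  by rewrite (addrC (1 - b)) -(mulrA 2 (1 - b)) (mulrC (1 - b)) mulrA; ring.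
set P := 1 - 2 * (1 - a) * (1 - b) / (1 - a + (1 - b)).
have EP : erel_int a b P = ((b - a) / (2 - a - b))%:E.
  by rewrite (@erel_int_sym _ a b P) /P Ep H2 Ec.
rewrite EP erel_opt_sym H3 Ec; split => //.
move=> pt Hpt; rewrite -EP (@erel_int_sym _ a b pt) (@erel_int_sym _ a b P) /P Ep; apply: H1.
by move: Hpt => /andP[? ?]; apply/andP; split; lra.
Qed.
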